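(* Let $\mathcal A$ be a commutative semiring with negation map $(-)$ and let $A,B\in M_n(\mathcal A)$. Then $\mathrm{adj}(B)\,\mathrm{adj}(A)\preceq_\circ \mathrm{adj}(AB)$ (entrywise).
   Context: A commutative semiring: commutative associative addition with neutral $\mathbb 0$, commutative associative multiplication with identity $\mathbb 1$, distributive, $x\mathbb 0=\mathbb 0$. Negation map: $(-):\mathcal A\to\mathcal A$ with $(-)(x+y)=(-)x+(-)y$, $(-)((-)x)=x$, $(-)(xy)=((-)x)y$. Write $x(-)y:=x+((-)y)$, $x^\circ:=x(-)x$; $x\preceq_\circ y$ iff $y=x+z^\circ$ for some $z\in\mathcal A$; for matrices, $X\preceq_\circ Y$ iff $X_{ij}\preceq_\circ Y_{ij}$ for all $i,j$. For a permutation $\pi$, $(-)^\pi x=x$ if $\pi$ is even and $(-)x$ if odd; similarly $(-)^kx$ is $x$ for $k$ even and $(-)x$ for $k$ odd. The $(-)$-determinant of $A=(a_{ij})$ is $|A|=\sum_{\pi\in S_n}(-)^\pi\prod_i a_{i,\pi(i)}$. The $(-)$-adjoint $\mathrm{adj}(A)$ is the matrix whose $(i,j)$ entry is $(-)^{i+j}|A_{(j,i)}|$, where $A_{(j,i)}$ is $A$ with row $j$ and column $i$ deleted. *)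

(* Defs.v *)
From HB Require Import structures.
From mathcomp Require Import all_boot all_order all_algebra all_fingroup.
Set Implicit Arguments. Unset Strict Implicit. Unset Printing Implicit Defensive.
Import GRing.Theory.
Local Open Scope ring_scope.

Definition is_negation_map (R : comPzSemiRingType) (neg : R -> R) : Prop :=
  [/\ forall x y : R, neg (x + y) = neg x + neg y,
      forall x : R, neg (neg x) = x &
      forall x y : R, neg (x * y) = neg x * y].

Definition negpow (R : comPzSemiRingType) (neg : R -> R) (b : bool) (x : R) : R :=
  if b then neg x else x.

Definition qzero (R : comPzSemiRingType) (neg : R -> R) (x : R) : R := x + neg x.

Definition prec_circ (R : comPzSemiRingType) (neg : R -> R) (x y : R) : Prop :=
  exists z : R, y = x + qzero neg z.

Definition mx_prec_circ (R : comPzSemiRingType) (neg : R -> R) m n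
  (X Y : 'M[R]_(m, n)) : Prop :=
  forall i j, prec_circ neg (X i j) (Y i j).

Definition negdet (R : comPzSemiRingType) (neg : R -> R) n (A : 'M[R]_n) : R :=
  \sum_(s : 'S_n) negpow neg (odd_perm s) (\prod_i A i (s i)).

Definition negadj (R : comPzSemiRingType) (neg : R -> R) n (A : 'M[R]_n) : 'M[R]_n :=
  \matrix_(i, j) negpow neg (odd (i + j)%N) (negdet neg (row' j (col' i A))).

(* Main.v *)
Require Import Defs.
From HB Require Import structures.
From mathcomp Require Import all_boot all_order all_algebra all_fingroup.
Set Implicit Arguments. Unset Strict Implicit. Unset Printing Implicit Defensive.
Import GRing.Theory.
Local Open Scope ring_scope.

Lemma neg0 (R : comPzSemiRingType) (neg : R -> R) (Hneg : is_negation_map neg) : neg 0 = 0.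
Proof. case: Hneg => _ _ HM. by have := HM 0 0; rewrite !mulr0. Qed.

Lemma negpowD (R : comPzSemiRingType) (neg : R -> R) (Hneg : is_negation_map neg) b (x y : R) :
  negpow neg b (x + y) = negpow neg b x + negpow neg b y.
Proof. case: Hneg => HD _ _; by case: b => //=; rewrite HD. Qed.

Lemma negpow0 (R : comPzSemiRingType) (neg : R -> R) (Hneg : is_negation_map neg) b :
  negpow neg b 0 = 0.
Proof. case: b => //=; exact: neg0. Qed.

Lemma negpow_sum (R : comPzSemiRingType) (neg : R -> R) (Hneg : is_negation_map neg) b
   (I : Type) (r : seq I) (P : pred I) (F : I -> R) :
  negpow neg b (\sum_(i <- r | P i) F i) = \sum_(i <- r | P i) negpow neg b (F i).
Proof.
elim/big_rec2: _ => [|i x y _ <-]; first exact: negpow0.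
by rewrite negpowD.
Qed.

Lemma negpowMl (R : comPzSemiRingType) (neg : R -> R) (Hneg : is_negation_map neg) b (x y : R) :
  negpow neg b x * y = negpow neg b (x * y).
Proof. case: Hneg => _ _ HM; by case: b => //=; rewrite HM. Qed.

Lemma negpowMr (R : comPzSemiRingType) (neg : R -> R) (Hneg : is_negation_map neg) b (x y : R) :
  x * negpow neg b y = negpow neg b (x * y).
Proof. by rewrite mulrC negpowMl // mulrC. Qed.

Lemma negpowK (R : comPzSemiRingType) (neg : R -> R) (Hneg : is_negation_map neg) a b (x : R) :
  negpow neg a (negpow neg b x) = negpow neg (a (+) b) x.
Proof. case: Hneg => _ HK _; by case: a; case: b => //=; rewrite HK. Qed.

Lemma negpowMM (R : comPzSemiRingType) (neg : R -> R) (Hneg : is_negation_map neg) a b (x y : R) :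
  negpow neg a x * negpow neg b y = negpow neg (a (+) b) (x * y).
Proof. by rewrite negpowMl // negpowMr // negpowK // addbC. Qed.

Definition isq (R : comPzSemiRingType) (neg : R -> R) (y : R) := exists z, y = qzero neg z.

Lemma isq0 (R : comPzSemiRingType) (neg : R -> R) (Hneg : is_negation_map neg) : isq neg 0.
Proof. exists 0; by rewrite /qzero neg0 // addr0. Qed.

Lemma isqD (R : comPzSemiRingType) (neg : R -> R) (Hneg : is_negation_map neg) x y :
  isq neg x -> isq neg y -> isq neg (x + y).
Proof.
case: (Hneg) => HD _ _ [a ->] [b ->]; exists (a + b).
by rewrite /qzero HD addrACA.
Qed.

Lemma isq_sum (R : comPzSemiRingType) (neg : R -> R) (Hneg : is_negation_map neg)
   (I : Type) (r : seq I) (P : pred I) (F : I -> R) :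
  (forall i, P i -> isq neg (F i)) -> isq neg (\sum_(i <- r | P i) F i).
Proof. move=> H; apply: big_ind => //; [exact: isq0 | exact: isqD]. Qed.

Lemma isq_negpow (R : comPzSemiRingType) (neg : R -> R) (Hneg : is_negation_map neg) b x :
  isq neg x -> isq neg (negpow neg b x).
Proof.
case: (Hneg) => HD HK _ [a ->]; exists a; case: b => //=.
by rewrite /qzero HD HK addrC.
Qed.

Definition Gf (R : comPzSemiRingType) (neg : R -> R) m (C : 'M[R]_(m, m.+1)) (D : 'M[R]_(m.+1, m))
  (f : {ffun 'I_m -> 'I_m.+1}) : R :=
  \sum_(s : 'S_m) negpow neg (odd_perm s) (\prod_i (C i (f i) * D (f i) (s i))).

Lemma negdet_mul_expand (R : comPzSemiRingType) (neg : R -> R) (Hneg : is_negation_map neg)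
  m (C : 'M[R]_(m, m.+1)) (D : 'M[R]_(m.+1, m)) :
  negdet neg (C *m D) = \sum_(f : {ffun 'I_m -> 'I_m.+1}) Gf neg C D f.
Proof.
rewrite /negdet /Gf exchange_big /=; apply: eq_bigr => s _.
rewrite -negpow_sum //; congr negpow.
rewrite -(bigA_distr_bigA (fun i l => C i l * D l (s i))) /=.
by apply: eq_bigr => i _; rewrite mxE.
Qed.

Lemma Gf_noninj (R : comPzSemiRingType) (neg : R -> R) (Hneg : is_negation_map neg)
  m (C : 'M[R]_(m, m.+1)) (D : 'M[R]_(m.+1, m)) (f : {ffun 'I_m -> 'I_m.+1}) :
  ~~ injectiveb f -> isq neg (Gf neg C D f).
Proof.
case/injectivePn => i1 [i2 Hne Hf].
pose t := tperm i1 i2.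
rewrite /Gf (bigID (fun s : 'S_m => odd_perm s)) /=.
rewrite (reindex_inj (mulgI t)) /=.
have Ht : forall s : 'S_m, odd_perm (t * s)%g = ~~ odd_perm s.
  by move=> s; rewrite odd_permM odd_tperm Hne.
have HX : forall s : 'S_m, \prod_i (C i (f i) * D (f i) ((t * s)%g i))
                            = \prod_i (C i (f i) * D (f i) (s i)).
  move=> s; rewrite !big_split /=; congr (_ * _).
  rewrite (reindex_perm t) /=; apply: eq_bigr => i _.
  rewrite permM tpermK; congr (D _ _).
  by rewrite /t; case: tpermP => // ->.
exists (\sum_(s : 'S_m | ~~ odd_perm s)
          negpow neg (odd_perm s) (\prod_i (C i (f i) * D (f i) (s i)))).
rewrite /qzero addrC; congr (_ + _).
rewrite -[neg _]/(negpow neg true _) negpow_sum //; apply: eq_big => s; first by rewrite Ht.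
by move=> Hs; rewrite Ht HX; move: Hs; rewrite Ht => /negbTE ->.
Qed.

Definition liftf m (p : 'I_m.+1 * 'S_m) : {ffun 'I_m -> 'I_m.+1} :=
  [ffun i => lift p.1 (p.2 i)].

Lemma liftf_inj m : injective (@liftf m).
Proof.
move=> [k t] [k' t'] /ffunP /= H.
have Hk : k = k'.
  apply/eqP; apply/negPn/negP => Hne.
  have [j Hj _] := unlift_some Hne.
  have := H (t^-1 j)%g; rewrite !ffunE /= permKV -Hj.
  by move=> Habs; have := neq_lift k' (t' (t^-1 j)%g); rewrite -Habs eqxx.
subst k'; congr pair; apply/permP => i.
by have := H i; rewrite !ffunE /= => /lift_inj.
Qed.

Lemma liftf_onto m (f : {ffun 'I_m -> 'I_m.+1}) :
  injectiveb f -> f \in [set liftf p | p in [set: 'I_m.+1 * 'S_m]].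
Proof.
move/injectiveP => Hf.
case: (pickP (fun k => k \notin codom f)) => [k Hk | H]; last first.
  have H1 : #|codom f| = m by rewrite card_codom // card_ord.
  have H2 : codom f =i predT by move=> k; have := H k => /negbFE ->.
  by move: H1; rewrite (eq_card H2) card_ord => /esym /n_Sn.
have Hne : forall i, k != f i.
  by move=> i; apply: contraNneq Hk => ->; exact: codom_f.
pose t0 i := odflt i (unlift k (f i)).
have Ht0 : forall i, lift k (t0 i) = f i.
  move=> i; have [j Hj Hu] := unlift_some (Hne i).
  by rewrite /t0 Hu /= -Hj.
have t0inj : injective t0.
  by move=> i1 i2 Heq; apply: Hf; rewrite -!Ht0 Heq.
apply/imsetP; exists (k, perm t0inj); first by rewrite inE.
by apply/ffunP => i; rewrite ffunE /= permE Ht0.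
Qed.

Lemma Gf_lift (R : comPzSemiRingType) (neg : R -> R) (Hneg : is_negation_map neg)
  m (C : 'M[R]_(m, m.+1)) (D : 'M[R]_(m.+1, m)) k :
  \sum_(t : 'S_m) Gf neg C D (liftf (k, t)) = negdet neg (col' k C) * negdet neg (row' k D).
Proof.
rewrite /negdet big_distrl /=; apply: eq_bigr => t _.
rewrite big_distrr /= /Gf (reindex_inj (mulgI t)) /=.
apply: eq_bigr => r _.
rewrite negpowMM // odd_permM; congr negpow.
rewrite big_split /=; congr (_ * _).
  by apply: eq_bigr => i _; rewrite ffunE mxE.
rewrite [RHS](reindex_perm t) /=; apply: eq_bigr => i _.
by rewrite ffunE /= permM mxE.
Qed.

Lemma cauchy_binet (R : comPzSemiRingType) (neg : R -> R) (Hneg : is_negation_map neg)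
  m (C : 'M[R]_(m, m.+1)) (D : 'M[R]_(m.+1, m)) :
  exists q, isq neg q /\
    negdet neg (C *m D) = \sum_k negdet neg (col' k C) * negdet neg (row' k D) + q.
Proof.
rewrite negdet_mul_expand //.
rewrite (bigID (fun f => f \in [set liftf p | p in [set: 'I_m.+1 * 'S_m]])) /=.
eexists; split; last first.
  congr (_ + _).
  rewrite big_imset /=; last by move=> ? ? _ _; apply: liftf_inj.
  rewrite (eq_bigl predT) => [|p]; last by rewrite inE.
  rewrite -(pair_bigA _ (fun k t => Gf neg C D (liftf (k, t)))) /=.
  by apply: eq_bigr => k _; apply: Gf_lift.
apply: isq_sum => // f Hf; apply: Gf_noninj => //.
by apply: contra Hf; apply: liftf_onto.
Qed.

Theorem proposition8p20 (R : comPzSemiRingType) (neg : R -> R)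
  (Hneg : is_negation_map neg) (n : nat) (A B : 'M[R]_n) :
  mx_prec_circ neg (negadj neg B *m negadj neg A) (negadj neg (A *m B)).
Proof.
case: n A B => [|m] A B i j; first by case: i.
rewrite !mxE.
have E : row' j (col' i (A *m B)) = row' j A *m col' i B.
  by apply/matrixP => a b; rewrite !mxE; apply: eq_bigr => l _; rewrite !mxE.
rewrite E.
have [q [Hq ->]] := cauchy_binet Hneg (row' j A) (col' i B).
have [z Hz] := isq_negpow Hneg (odd (i + j)) Hq.
exists z; rewrite negpowD // Hz; congr (_ + _).
rewrite negpow_sum //; apply: eq_bigr => k _.
rewrite !mxE negpowMM // mulrC.
have -> : row' j (col' k A) = col' k (row' j A) by apply/matrixP => a b; rewrite !mxE.
congr negpow.
by rewrite !oddD; case: (odd i); case: (odd k); case: (odd j).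
Qed.
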